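(* Let $\gamma\in[0,1]$ and let $(\gamma_n)$ be a $[0,1]$-valued sequence with $|\gamma_n-\gamma|=O(1/n)$. Then for every $u\in(0,1)$, $\lim_{n\to\infty}\phi_{n,\gamma_n}(u)=\tfrac12\mathbf 1_{\{\gamma\}}(u)+\mathbf 1_{(\gamma,1]}(u)$, and $\lim_{n\to\infty}\phi_{n,\gamma_n}'(u)$ equals $0$ if $u\ne\gamma$ and $+\infty$ if $u=\gamma$.
   Context: $[x]$ is the integer part. $\phi_{n,\alpha}(t)=\sum_{j=1+[(n-1)\alpha]}^n\binom{n}{j}t^j(1-t)^{n-j}$, $t\in[0,1]$. $\mathbf 1_A$ is the indicator of $A$. *)

(* Defs.v *)
From Stdlib Require Import Reals Lra ZArith ClassicalEpsilon.
From Coquelicot Require Import Coquelicot.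
Open Scope R_scope.

Definition intpart (x : R) : Z := Int_part x.

Definition phi (n : nat) (alpha : R) (t : R) : R :=
  sum_f_R0 (fun j =>
    if Z.leb (1 + intpart ((INR n - 1) * alpha))%Z (Z.of_nat j)
    then Binomial.C n j * t ^ j * (1 - t) ^ (n - j)
    else 0) n.

Definition indic (A : R -> Prop) (x : R) : R :=
  if excluded_middle_informative (A x) then 1 else 0.

(* Main.v *)
Require Import Defs.
From Stdlib Require Import Reals Lra Lia ZArith ClassicalEpsilon.
From Coquelicot Require Import Coquelicot.
Open Scope R_scope.


Fixpoint sumr (f : nat -> R) (n : nat) : R :=
  match n with O => 0 | S k => sumr f k + f k end.

Lemma sumr_ext f g n : (forall i, (i < n)%nat -> f i = g i) -> sumr f n = sumr g n.
Proof. induction n; simpl; intros H; auto. rewrite IHn by (intros; apply H; lia). rewrite (H n) by lia. auto. Qed.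

Lemma sumr_plus f g n : sumr (fun i => f i + g i) n = sumr f n + sumr g n.
Proof. induction n; simpl; [lra|]. rewrite IHn; lra. Qed.

Lemma sumr_minus f g n : sumr (fun i => f i - g i) n = sumr f n - sumr g n.
Proof. induction n; simpl; [lra|]. rewrite IHn; lra. Qed.

Lemma sumr_scal c f n : sumr (fun i => c * f i) n = c * sumr f n.
Proof. induction n; simpl; [lra|]. rewrite IHn; lra. Qed.

Lemma sumr_le f g n : (forall i, (i < n)%nat -> f i <= g i) -> sumr f n <= sumr g n.
Proof. induction n; simpl; intros H; [lra|]. assert (f n <= g n) by (apply H; lia).
 assert (sumr f n <= sumr g n) by (apply IHn; intros; apply H; lia). lra. Qed.

Lemma sumr_nonneg f n : (forall i, (i < n)%nat -> 0 <= f i) -> 0 <= sumr f n.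
Proof. intros H. replace 0 with (sumr (fun _ => 0) n). apply sumr_le; auto.
 induction n; simpl; auto. rewrite IHn; [lra|]. intros; apply H; lia. Qed.

Lemma sumr_abs f n : Rabs (sumr f n) <= sumr (fun i => Rabs (f i)) n.
Proof. induction n; simpl. rewrite Rabs_R0; lra.
 eapply Rle_trans. apply Rabs_triang. lra. Qed.

Lemma sumr_shift f n : sumr f (S n) = f O + sumr (fun i => f (S i)) n.
Proof. induction n. simpl; lra. change (sumr f (S (S n))) with (sumr f (S n) + f (S n)).
 rewrite IHn. simpl. lra. Qed.

Lemma sumr_rev f n : sumr f n = sumr (fun i => f (n - 1 - i)%nat) n.
Proof. revert f; induction n; intros f. reflexivity.
 rewrite sumr_shift. simpl sumr at 2. rewrite (IHn (fun i => f (S i))).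
 replace (S n - 1 - n)%nat with O by lia.
 rewrite Rplus_comm. f_equal. apply sumr_ext. intros i Hi. f_equal. lia.
 f_equal; lia. Qed.

Lemma sum_f_R0_sumr f n : sum_f_R0 f n = sumr f (S n).
Proof. induction n; simpl. lra. simpl in IHn. rewrite IHn. reflexivity. Qed.

Lemma sumr_const0 n : sumr (fun _ => 0) n = 0.
Proof. induction n; simpl; auto. rewrite IHn; lra. Qed.

Lemma sumr_single f a n : (a < n)%nat ->
  sumr (fun x => if Nat.eqb x a then f x else 0) n = f a.
Proof. induction n; intros H. lia. simpl. destruct (Nat.eq_dec a n).
 - subst. rewrite Nat.eqb_refl. replace (sumr _ n) with 0. lra.
   rewrite <- (sumr_const0 n) at 1. apply sumr_ext. intros i Hi.
   destruct (Nat.eqb_spec i n); auto; lia.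
 - rewrite IHn by lia. destruct (Nat.eqb_spec n a); [lia|lra]. Qed.

Definition B (n : nat) (p : R) (a : nat) : R :=
  Binomial.C n a * p ^ a * (1 - p) ^ (n - a).

Lemma C_pos n a : (a <= n)%nat -> 0 < Binomial.C n a.
Proof. intros H. unfold Binomial.C. apply Rdiv_lt_0_compat. apply INR_fact_lt_0.
 apply Rmult_lt_0_compat; apply INR_fact_lt_0. Qed.

Lemma B_nonneg n p a : 0 <= p <= 1 -> (a <= n)%nat -> 0 <= B n p a.
Proof. intros Hp Ha. unfold B. apply Rmult_le_pos. apply Rmult_le_pos.
 left; apply C_pos; auto. apply pow_le; lra. apply pow_le; lra. Qed.

Lemma B_sum n p : sumr (B n p) (S n) = 1.
Proof. rewrite <- sum_f_R0_sumr. unfold B. rewrite <- binomial. replace (p + (1-p)) with 1 by ring.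
 apply pow1. Qed.

Lemma C_absorb m b : (b <= m)%nat ->
  INR (S b) * Binomial.C (S m) (S b) = INR (S m) * Binomial.C m b.
Proof. intros H. unfold Binomial.C. replace (S m - S b)%nat with (m - b)%nat by lia.
 rewrite !fact_simpl, !mult_INR.
 assert (INR (Factorial.fact b) <> 0) by apply INR_fact_neq_0.
 assert (INR (Factorial.fact m) <> 0) by apply INR_fact_neq_0.
 assert (INR (Factorial.fact (m-b)) <> 0) by apply INR_fact_neq_0.
 assert (INR (S b) <> 0) by (apply not_0_INR; lia).
 field. auto. Qed.

Lemma absorb m p h :
  sumr (fun x => INR x * B (S m) p x * h x) (S (S m)) =
  INR (S m) * p * sumr (fun x => B m p x * h (S x)) (S m).
Proof. rewrite sumr_shift. simpl INR at 1. rewrite Rmult_0_l, Rmult_0_l, Rplus_0_l.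
 rewrite <- sumr_scal. apply sumr_ext. intros i Hi. unfold B.
 replace (S m - S i)%nat with (m - i)%nat by lia.
 simpl pow. assert (HC := C_absorb m i ltac:(lia)).
 transitivity ((INR (S i) * Binomial.C (S m) (S i)) * p * p^i * (1-p)^(m-i) * h (S i)). ring. rewrite HC. ring. Qed.

Lemma B_mean n p : sumr (fun x => INR x * B n p x) (S n) = INR n * p.
Proof. destruct n as [|m]. simpl. lra.
 transitivity (sumr (fun x => INR x * B (S m) p x * 1) (S (S m))).
 apply sumr_ext; intros; ring. rewrite absorb.
 rewrite (sumr_ext _ (B m p)) by (intros; ring). rewrite B_sum. ring. Qed.

Lemma B_m2 n p : sumr (fun x => INR x ^ 2 * B n p x) (S n) = INR n * p * (INR n * p - p + 1).
Proof. destruct n as [|m]. simpl. lra.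
 transitivity (sumr (fun x => INR x * B (S m) p x * INR x) (S (S m))).
 apply sumr_ext; intros; ring. rewrite absorb.
 rewrite (sumr_ext _ (fun x => INR x * B m p x + B m p x)).
 rewrite sumr_plus, B_mean, B_sum. rewrite S_INR. ring.
 intros. rewrite S_INR. ring. Qed.

Lemma B_var n p : sumr (fun x => (INR x - INR n * p) ^ 2 * B n p x) (S n) = INR n * p * (1 - p).
Proof. rewrite (sumr_ext _ (fun x => (INR x ^ 2 * B n p x - (2 * (INR n * p)) * (INR x * B n p x))
   + (INR n * p)^2 * B n p x)) by (intros; ring).
 rewrite sumr_plus, sumr_minus, !sumr_scal, B_m2, B_mean, B_sum. ring. Qed.

Lemma B_center n p : sumr (fun x => (INR x - INR n * p) * B n p x) (S n) = 0.
Proof. rewrite (sumr_ext _ (fun x => INR x * B n p x - (INR n * p) * B n p x)) by (intros; ring).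
 rewrite sumr_minus, sumr_scal, B_mean, B_sum. ring. Qed.

Lemma Rabs_le_inv x b : Rabs x <= b -> -b <= x <= b.
Proof. intros H. split; [assert (H2 := Rle_abs (-x)); rewrite Rabs_Ropp in H2 | assert (H2 := Rle_abs x)]; lra. Qed.

Definition G (N : nat) (F : nat -> R) (a : nat) : R :=
  sumr (fun x => if Nat.leb a x then F x else 0) (S N).

Lemma G_step N F a : (a <= N)%nat -> G N F a - G N F (S a) = F a.
Proof. intros H. unfold G. rewrite <- sumr_minus.
 rewrite <- (sumr_single F a (S N)) by lia. apply sumr_ext. intros i Hi.
 destruct (Nat.leb_spec a i), (Nat.leb_spec (S a) i), (Nat.eqb_spec i a); try lia; lra. Qed.

Lemma G_big N F a : (N < a)%nat -> G N F a = 0.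
Proof. intros H. unfold G. transitivity (sumr (fun _ => 0) (S N)); [|apply sumr_const0]. apply sumr_ext. intros i Hi.
 destruct (Nat.leb_spec a i); [lia|auto]. Qed.

Lemma G_0 N F : G N F 0 = sumr F (S N).
Proof. unfold G. apply sumr_ext. intros; reflexivity. Qed.

Lemma G_window N F a d : (a + d <= S N)%nat ->
  G N F a - G N F (a + d) = sumr (fun j => F (a + j)%nat) d.
Proof. induction d; intros H. rewrite Nat.add_0_r. simpl; lra.
 simpl sumr. rewrite <- IHd by lia. replace (a + S d)%nat with (S (a + d)) by lia.
 rewrite <- (G_step N F (a + d)) by lia. lra. Qed.

Lemma G_diff_le N F M a d : 0 <= M -> (forall x, (x <= N)%nat -> 0 <= F x <= M) ->
  0 <= G N F a - G N F (a + d) <= INR d * M.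
Proof. intros HM HF. induction d. rewrite Nat.add_0_r. simpl; lra.
 replace (a + S d)%nat with (S (a + d)) by lia. rewrite S_INR.
 destruct (Compare_dec.le_lt_dec (a + d) N).
 - assert (H := G_step N F (a+d) l). specialize (HF (a+d)%nat l). lra.
 - assert (G N F (a+d) = 0) by (apply G_big; lia). assert (G N F (S (a+d)) = 0) by (apply G_big; lia). lra. Qed.

Definition Tl n p a := G n (B n p) a.

Lemma Tl_range n p a : 0 <= p <= 1 -> 0 <= Tl n p a <= 1.
Proof. intros Hp. unfold Tl, G. split.
 apply sumr_nonneg. intros i Hi. destruct (Nat.leb a i); [apply B_nonneg; auto; lia| lra].
 rewrite <- (B_sum n p). apply sumr_le. intros i Hi. destruct (Nat.leb a i). lra. apply B_nonneg; auto; lia. Qed.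

Lemma Tl_compl n p a : 1 - Tl n p a = sumr (fun x => (if Nat.leb a x then 0 else 1) * B n p x) (S n).
Proof. rewrite <- (B_sum n p) at 1. unfold Tl, G. rewrite <- sumr_minus. apply sumr_ext. intros.
 destruct (Nat.leb a i); ring. Qed.

Lemma Tl_as n p a : Tl n p a = sumr (fun x => (if Nat.leb a x then 1 else 0) * B n p x) (S n).
Proof. unfold Tl, G. apply sumr_ext. intros. destruct (Nat.leb a i); ring. Qed.

Lemma cheb n p w t : 0 <= p <= 1 -> 0 < t ->
  (forall x, (x <= n)%nat -> 0 <= w x <= 1) ->
  (forall x, (x <= n)%nat -> w x <> 0 -> t <= Rabs (INR x - INR n * p)) ->
  sumr (fun x => w x * B n p x) (S n) <= INR n * p * (1 - p) / t ^ 2.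
Proof. intros Hp Ht Hw1 Hw2.
 apply (Rle_trans _ (sumr (fun x => /t^2 * ((INR x - INR n*p)^2 * B n p x)) (S n))).
 2:{ rewrite sumr_scal, B_var. right. field. lra. }
 apply sumr_le. intros i Hi. assert (HB := B_nonneg n p i Hp ltac:(lia)).
 destruct (Req_dec (w i) 0) as [E|E]. rewrite E. 
 assert (0 <= / t ^ 2 * ((INR i - INR n * p) ^ 2)). apply Rmult_le_pos.
 left; apply Rinv_0_lt_compat; apply pow_lt; auto. apply pow2_ge_0. nra.
 assert (H2 := Hw2 i ltac:(lia) E). assert (H1 := Hw1 i ltac:(lia)).
 assert (t^2 <= (INR i - INR n * p) ^ 2).
 { rewrite <- (pow2_abs (INR i - _)). apply pow_incr; lra. }
 assert (1 <= / t ^ 2 * ((INR i - INR n * p) ^ 2)).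
 { apply (Rmult_le_reg_l (t^2)). apply pow_lt; auto. rewrite <- Rmult_assoc, Rinv_r, Rmult_1_l, Rmult_1_r. auto.
   apply pow_nonzero; lra. }
 assert (w i * B n p i <= 1 * B n p i) by (apply Rmult_le_compat_r; lra).
 assert (1 * B n p i <= / t ^ 2 * ((INR i - INR n * p) ^ 2) * B n p i) by (apply Rmult_le_compat_r; lra).
 lra. Qed.

Lemma cheb1 n p w t : 0 <= p <= 1 -> 0 < t ->
  (forall x, (x <= n)%nat -> 0 <= w x <= 1) ->
  (forall x, (x <= n)%nat -> w x <> 0 -> t <= Rabs (INR x - INR n * p)) ->
  sumr (fun x => w x * Rabs (INR x - INR n * p) * B n p x) (S n) <= INR n * p * (1 - p) / t.
Proof. intros Hp Ht Hw1 Hw2.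
 apply (Rle_trans _ (sumr (fun x => /t * ((INR x - INR n*p)^2 * B n p x)) (S n))).
 2:{ rewrite sumr_scal, B_var. right. field. lra. }
 apply sumr_le. intros i Hi. assert (HB := B_nonneg n p i Hp ltac:(lia)).
 set (y := INR i - INR n * p).
 destruct (Req_dec (w i) 0) as [E|E]. rewrite E.
 assert (0 <= / t * (y ^ 2)). apply Rmult_le_pos.
 left; apply Rinv_0_lt_compat; auto. apply pow2_ge_0. nra.
 assert (H2 := Hw2 i ltac:(lia) E). assert (H1 := Hw1 i ltac:(lia)). fold y in H2.
 assert (Rabs y <= / t * y ^ 2).
 { apply (Rmult_le_reg_l t). auto. rewrite <- Rmult_assoc, Rinv_r, Rmult_1_l by lra.
   rewrite <- (pow2_abs y). assert (0 <= Rabs y) by apply Rabs_pos. nra. }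
 assert (0 <= Rabs y) by apply Rabs_pos.
 assert (w i * Rabs y <= Rabs y) by nra.
 assert (w i * Rabs y * B n p i <= / t * y ^ 2 * B n p i) by (apply Rmult_le_compat_r; lra).
 lra. Qed.

Lemma absdev n p s : 0 <= p <= 1 -> 0 < s ->
  sumr (fun x => Rabs (INR x - INR n * p) * B n p x) (S n) <= (INR n * p * (1 - p) / s + s) / 2.
Proof. intros Hp Hs.
 apply (Rle_trans _ (sumr (fun x => /2 * (/s * ((INR x - INR n*p)^2 * B n p x) + s * B n p x)) (S n))).
 2:{ rewrite sumr_scal, sumr_plus, !sumr_scal, B_var, B_sum. right. field. lra. }
 apply sumr_le. intros i Hi. assert (HB := B_nonneg n p i Hp ltac:(lia)).
 set (y := INR i - INR n * p).
 assert (Rabs y <= / 2 * (/ s * y ^ 2 + s)).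
 { rewrite <- (pow2_abs y). assert (0 <= Rabs y) by apply Rabs_pos.
   assert (0 <= (Rabs y - s)^2) by apply pow2_ge_0.
   apply (Rmult_le_reg_l (2 * s)). lra.
   replace (2 * s * (/ 2 * (/ s * Rabs y ^ 2 + s))) with (Rabs y ^ 2 + s * s) by (field; lra). nra. }
 assert (Rabs y * B n p i <= / 2 * (/ s * y ^ 2 + s) * B n p i) by (apply Rmult_le_compat_r; lra).
 replace (/ 2 * (/ s * (y ^ 2 * B n p i) + s * B n p i)) with (/ 2 * (/ s * y ^ 2 + s) * B n p i) by ring. lra. Qed.

Lemma C_nn n : Binomial.C n n = 1.
Proof. unfold Binomial.C. rewrite Nat.sub_diag. simpl. rewrite Rmult_1_r. field. apply INR_fact_neq_0. Qed.

Lemma B_ratio n p a : (a < n)%nat -> p < 1 ->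
  B n p (S a) = B n p a * ((INR n - INR a) * p / ((INR a + 1) * (1 - p))).
Proof. intros H Hp. unfold B. rewrite pascal_step3 by auto. rewrite minus_INR by lia.
 replace (n - a)%nat with (S (n - S a)) by lia. rewrite S_INR. simpl pow.
 field. split. lra. assert (0 <= INR a) by apply pos_INR. lra. Qed.

Lemma B_pascal m p b : (b < m)%nat ->
  (INR (S b) - INR (S m) * p) * B (S m) p (S b) = INR (S m) * p * (1 - p) * (B m p b - B m p (S b)).
Proof. intros H. unfold B. rewrite <- pascal by auto.
 assert (HC := C_absorb m b ltac:(lia)).
 replace (S m - S b)%nat with (m - b)%nat by lia.
 replace (m - b)%nat with (S (m - S b)) by lia. simpl pow.
 transitivity ((INR (S b) * Binomial.C (S m) (S b)) * (p * p ^ b * ((1 - p) * (1 - p) ^ (m - S b)))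
   - INR (S m) * p * (Binomial.C m b + Binomial.C m (S b)) * (p * p ^ b * ((1 - p) * (1 - p) ^ (m - S b)))).
 rewrite <- pascal by auto. ring. rewrite HC. ring. Qed.

Lemma identI m p a : (a <= m)%nat ->
  INR (S m) * p * (1 - p) * B m p a =
  G (S m) (fun x => (INR x - INR (S m) * p) * B (S m) p x) (S a).
Proof. intros Ha. remember (m - a)%nat as d. assert (a = m - d)%nat by lia. subst a. clear Heqd.
 induction d.
 - rewrite Nat.sub_0_r. set (F := fun x => (INR x - INR (S m) * p) * B (S m) p x).
   assert (E := G_step (S m) F (S m) ltac:(lia)). rewrite (G_big (S m) F (S (S m))) in E by lia.
   rewrite Rminus_0_r in E. rewrite E. unfold F, B. rewrite !C_nn, !Nat.sub_diag. simpl pow.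
   rewrite S_INR. ring.
 - destruct (Compare_dec.le_lt_dec d m) as [Hd|Hd].
   2:{ replace (m - S d)%nat with (m - d)%nat by lia. apply IHd. lia. }
   destruct (Nat.eq_dec d m) as [Ed|Ed].
   + subst d. replace (m - S m)%nat with (m - m)%nat by lia. apply IHd. lia.
   + set (b := (m - S d)%nat). replace (m - d)%nat with (S b) in IHd by lia.
     set (F := fun x => (INR x - INR (S m) * p) * B (S m) p x).
     assert (E := G_step (S m) F (S b) ltac:(lia)). fold F in IHd.
     assert (P := B_pascal m p b ltac:(lia)). unfold F in E at 3. rewrite P in E.
     rewrite <- IHd in E by lia. lra. Qed.

Lemma pmf_bound m p a : 0 < p < 1 -> (a <= m)%nat ->
  B m p a <= / sqrt (INR (S m) * p * (1 - p)).
Proof. intros Hp Ha.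
 assert (Hv : 0 < INR (S m) * p * (1 - p)).
 { apply Rmult_lt_0_compat. apply Rmult_lt_0_compat. apply lt_0_INR; lia. lra. lra. }
 set (v := INR (S m) * p * (1 - p)) in *.
 assert (Hs : 0 < sqrt v) by (apply sqrt_lt_R0; auto).
 assert (Hss := sqrt_sqrt v ltac:(lra)).
 assert (HI := identI m p a Ha). fold v in HI.
 assert (HA := absdev (S m) p (sqrt v) ltac:(lra) Hs). fold v in HA.
 assert (Eq : (v / sqrt v + sqrt v) / 2 = sqrt v) by (rewrite <- Hss at 1; field; lra).
 rewrite Eq in HA.
 assert (G (S m) (fun x => (INR x - INR (S m) * p) * B (S m) p x) (S a) <=
   sumr (fun x => Rabs (INR x - INR (S m) * p) * B (S m) p x) (S (S m))).
 { unfold G. apply sumr_le. intros i Hi. assert (HB := B_nonneg (S m) p i ltac:(lra) ltac:(lia)).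
   destruct (Nat.leb (S a) i). 
   apply Rmult_le_compat_r. lra. apply RRle_abs. apply Rmult_le_pos. apply Rabs_pos. lra. }
 assert (v * B m p a <= sqrt v) by lra.
 apply (Rmult_le_reg_l v). lra. assert (Eq2 : v * / sqrt v = sqrt v) by (rewrite <- Hss at 1; field; lra).
 rewrite Eq2. lra. Qed.

Definition kk (n : nat) (al : R) : nat := Z.to_nat (1 + intpart ((INR n - 1) * al)).

Lemma kk_nonneg n al : 0 <= al <= 1 -> (0 <= 1 + intpart ((INR n - 1) * al))%Z.
Proof. intros H. unfold intpart. destruct (base_Int_part ((INR n - 1) * al)) as [H1 H2].
 assert (-1 <= (INR n - 1) * al). { assert (0 <= INR n) by apply pos_INR. nra. }
 assert (IZR (Int_part ((INR n - 1) * al)) > -2) by lra.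
 assert (-2 < Int_part ((INR n - 1) * al))%Z. { apply lt_IZR. lra. } lia. Qed.

Lemma kk_INR n al : 0 <= al <= 1 -> INR (kk n al) = 1 + IZR (Int_part ((INR n - 1) * al)).
Proof. intros H. unfold kk. rewrite INR_IZR_INZ. rewrite Znat.Z2Nat.id by (apply kk_nonneg; auto).
 rewrite plus_IZR. reflexivity. Qed.

Lemma phi_Tl n al t : 0 <= al <= 1 -> phi n al t = Tl n t (kk n al).
Proof. intros H. unfold phi, Tl, G. rewrite sum_f_R0_sumr. apply sumr_ext. intros i Hi.
 assert (H0 := kk_nonneg n al H). unfold kk.
 set (z := (1 + intpart ((INR n - 1) * al))%Z) in *.
 destruct (Z.leb_spec z (Z.of_nat i)), (Nat.leb_spec (Z.to_nat z) i); try lia; reflexivity. Qed.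

Lemma derive_B n x u : 0 < u < 1 -> (x <= n)%nat ->
  is_derive (fun t => B n t x) u ((INR x - INR n * u) / (u * (1 - u)) * B n u x).
Proof. intros Hu Hx. unfold B. auto_derive. auto.
 rewrite minus_INR by auto.
 assert (E1 : INR x * u ^ Init.Nat.pred x = INR x * u ^ x / u).
 { destruct x. simpl; field; lra. simpl. field. lra. }
 assert (E2 : (INR n - INR x) * (1 + - u) ^ Init.Nat.pred (n - x) = (INR n - INR x) * (1 - u) ^ (n - x) / (1 - u)).
 { destruct (n - x)%nat eqn:E. assert (n = x) by lia. subst. field; lra.
   simpl. replace (1 + - u) with (1 - u) by ring. field. lra. }
 rewrite Rmult_1_l, E1. rewrite Ropp_mult_distr_l_reverse, Rmult_1_l, E2.
 replace (1 + - u) with (1 - u) by ring. field. lra. Qed.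

Lemma is_derive_sumr (f : R -> nat -> R) df u N :
  (forall x, (x < N)%nat -> is_derive (fun t => f t x) u (df x)) ->
  is_derive (fun t => sumr (f t) N) u (sumr df N).
Proof. induction N; intros H. simpl. exact (is_derive_const (0:R) u).
 simpl. apply (is_derive_plus (fun t => sumr (f t) N) (fun t => f t N)).
 apply IHN. intros; apply H; lia. apply H; lia. Qed.

Lemma derive_Tl n k u : 0 < u < 1 ->
  is_derive (fun t => Tl n t k) u (/ (u * (1 - u)) * G n (fun x => (INR x - INR n * u) * B n u x) k).
Proof. intros Hu. unfold Tl, G. rewrite <- sumr_scal.
 apply (is_derive_sumr (fun t x => if Nat.leb k x then B n t x else 0)).
 intros x Hx. destruct (Nat.leb k x).
 - replace (/ (u * (1 - u)) * ((INR x - INR n * u) * B n u x)) with ((INR x - INR n * u) / (u * (1 - u)) * B n u x) by (field; lra).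
   apply derive_B; auto; lia.
 - replace (/ (u * (1 - u)) * 0) with 0 by ring. exact (is_derive_const (0:R) u).
Qed.

Lemma nat_floor x : 0 <= x -> exists k : nat, INR k <= x < INR k + 1.
Proof. intros Hx. destruct (archimed x) as [H1 H2].
 assert (Hu : (1 <= up x)%Z). { apply le_IZR. assert (0 < IZR (up x)) by lra.
   assert (0 < up x)%Z by (apply lt_IZR; auto). apply IZR_le. lia. }
 exists (Z.to_nat (up x - 1)). rewrite INR_IZR_INZ, Znat.Z2Nat.id by lia.
 rewrite minus_IZR. simpl. lra. Qed.

Lemma big_n c : exists N, forall n, (N <= n)%nat -> c <= INR n.
Proof. destruct (nat_floor (Rmax c 0)) as [k Hk]. apply Rmax_r.
 exists (S k). intros n Hn. apply le_INR in Hn. rewrite S_INR in Hn.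
 assert (c <= Rmax c 0) by apply Rmax_l. lra. Qed.

Lemma lim_eps v l : (forall eps, 0 < eps -> exists N, forall n, (N <= n)%nat -> Rabs (v n - l) <= eps) ->
  is_lim_seq v l.
Proof. intros H. apply is_lim_seq_spec. intros eps.
 destruct (H (eps / 2)) as [N HN]. destruct eps; simpl; lra.
 exists N. intros n Hn. specialize (HN n Hn). destruct eps; simpl in *; lra. Qed.

Lemma lim_pinf v : (forall M, exists N, forall n, (N <= n)%nat -> M <= v n) -> is_lim_seq v p_infty.
Proof. intros H. apply is_lim_seq_spec. intros M. destruct (H (M + 1)) as [N HN].
 exists N. intros n Hn. specialize (HN n Hn). lra. Qed.

Lemma sumr_const c n : sumr (fun _ => c) n = INR n * c.
Proof. induction n. simpl; lra. simpl sumr. rewrite IHn, S_INR. ring. Qed.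

Lemma B_sym N u a : (a <= N)%nat -> B N u a = B N (1 - u) (N - a).
Proof. intros H. unfold B. rewrite (pascal_step1 N a H). replace (N - (N - a))%nat with a by lia.
 replace (1 - (1 - u)) with u by ring. ring. Qed.

Lemma B_mono N u x j : 0 < u < 1 -> INR N * u <= INR x -> (x + j <= N)%nat ->
  B N u (x + j) <= B N u x.
Proof. intros Hu Hx. induction j; intros Hj. rewrite Nat.add_0_r; lra.
 replace (x + S j)%nat with (S (x + j)) by lia. rewrite B_ratio by (lia || lra).
 assert (HB := B_nonneg N u (x + j) ltac:(lra) ltac:(lia)).
 assert (H0 : 0 <= (INR N - INR (x + j)) * u / ((INR (x + j) + 1) * (1 - u))).
 { apply Rmult_le_pos. apply Rmult_le_pos. rewrite <- minus_INR by lia. apply pos_INR. lra.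
   left. apply Rinv_0_lt_compat. assert (0 <= INR (x+j)) by apply pos_INR. apply Rmult_lt_0_compat; lra. }
 assert (H1 : (INR N - INR (x + j)) * u / ((INR (x + j) + 1) * (1 - u)) <= 1).
 { assert (0 <= INR (x+j)) by apply pos_INR. assert (INR x <= INR (x + j)) by (apply le_INR; lia).
   apply (Rmult_le_reg_l ((INR (x + j) + 1) * (1 - u))). apply Rmult_lt_0_compat; lra.
   unfold Rdiv. rewrite Rmult_comm, Rmult_assoc, Rinv_l, Rmult_1_r. nra.
   apply Rgt_not_eq. apply Rmult_lt_0_compat; lra. }
 assert (IH := IHj ltac:(lia)). nra. Qed.

Lemma far_above N u d a : 0 < u < 1 -> 0 < d -> (a <= N)%nat ->
  INR N * u + INR N * d <= INR a -> 8 <= INR N * d ->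
  B N u a <= 8 / (INR N ^ 2 * d ^ 3).
Proof. intros Hu Hd Ha Hae Hbig.
 assert (HN : 0 < INR N). { destruct N. simpl in Hbig. lra. apply lt_0_INR; lia. }
 destruct (nat_floor (INR N * u + INR N * d / 2)) as [a0 Ha0].
 { assert (0 <= INR N * u) by (apply Rmult_le_pos; lra). nra. }
 assert (Ha0a : (a0 <= a)%nat). { apply INR_le. nra. }
 set (dd := (a - a0)%nat).
 assert (Hdd : INR N * d / 2 <= INR dd). { unfold dd. rewrite minus_INR by auto. nra. }
 assert (W := G_window N (B N u) a0 dd ltac:(unfold dd; lia)).
 replace (a0 + dd)%nat with a in W by (unfold dd; lia).
 assert (Wlow : INR dd * B N u a <= sumr (fun j => B N u (a0 + j)) dd).
 { rewrite <- sumr_const. apply sumr_le. intros j Hj.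
   replace a with ((a0 + j) + (dd - j))%nat at 1 by (unfold dd in *; lia).
   apply B_mono. auto. apply (Rle_trans _ (INR a0)). nra. apply le_INR; lia. unfold dd in *; lia. }
 assert (Tpos := Tl_range N u a ltac:(lra)). unfold Tl in Tpos.
 assert (Cb : G N (B N u) a0 <= INR N * u * (1 - u) / (INR N * d / 4) ^ 2).
 { assert (E := Tl_as N u a0). unfold Tl in E. rewrite E. apply cheb. lra. nra.
   intros x _. destruct (Nat.leb a0 x); lra.
   intros x _ Hw. destruct (Nat.leb_spec a0 x). 2: lra. apply le_INR in H.
   rewrite Rabs_right; lra. }
 assert (Cb2 : INR N * u * (1 - u) / (INR N * d / 4) ^ 2 <= 4 / (INR N * d ^ 2)).
 { replace (INR N * u * (1 - u) / (INR N * d / 4) ^ 2) with ((16 * (u * (1 - u))) * / (INR N * d ^ 2)) by (field; nra).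
   assert (u * (1 - u) <= 1/4) by (assert (0 <= (u - 1/2)^2) by apply pow2_ge_0; nra).
   unfold Rdiv. apply Rmult_le_compat_r. left; apply Rinv_0_lt_compat; nra. lra. }
 assert (HBa := B_nonneg N u a ltac:(lra) Ha).
 assert (INR dd * B N u a <= 4 / (INR N * d ^ 2)) by lra.
 apply (Rmult_le_reg_l (INR dd)). nra.
 apply (Rle_trans _ (4 / (INR N * d ^ 2))). auto.
 apply (Rmult_le_reg_l (INR N * d ^ 2)). nra.
 replace (INR N * d ^ 2 * (4 / (INR N * d ^ 2))) with 4 by (field; nra).
 replace (INR N * d ^ 2 * (INR dd * (8 / (INR N ^ 2 * d ^ 3)))) with (INR dd * 8 / (INR N * d)) by (field; nra).
 apply (Rmult_le_reg_l (INR N * d)). nra.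
 replace (INR N * d * (INR dd * 8 / (INR N * d))) with (INR dd * 8) by (field; nra). nra. Qed.

Lemma far_below N u d a : 0 < u < 1 -> 0 < d -> (a <= N)%nat ->
  INR a <= INR N * u - INR N * d -> 8 <= INR N * d ->
  B N u a <= 8 / (INR N ^ 2 * d ^ 3).
Proof. intros Hu Hd Ha Hae Hbig. rewrite B_sym by auto. apply far_above; try lia; try lra.
 rewrite minus_INR by auto. lra. Qed.

Lemma deriv_val u n k : 0 < u < 1 -> (1 <= k <= n)%nat ->
  / (u * (1 - u)) * G n (fun x => (INR x - INR n * u) * B n u x) k = INR n * B (n - 1) u (k - 1).
Proof. intros Hu Hk. destruct n as [|m]. lia. destruct k as [|a]. lia.
 rewrite <- identI by lia. replace (S m - 1)%nat with m by lia. replace (S a - 1)%nat with a by lia.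
 field. nra. Qed.

Lemma deriv_far u ga L (k : nat -> nat) : 0 < u < 1 -> u <> ga ->
  (forall n, (1 <= n)%nat -> (1 <= k n <= n)%nat /\ Rabs (INR (k n) - INR n * ga) <= L) ->
  is_lim_seq (fun n => / (u * (1 - u)) * G n (fun x => (INR x - INR n * u) * B n u x) (k n)) 0.
Proof. intros Hu Hne Hk. apply lim_eps. intros eps Heps.
 set (d := Rabs (ga - u) / 2).
 assert (Hd : 0 < d). { unfold d. assert (ga - u <> 0) by lra. assert (0 < Rabs (ga - u)) by (apply Rabs_pos_lt; auto). lra. }
 destruct (big_n (Rmax 2 (Rmax (8 / d + 1) (Rmax ((Rabs L + 1) / d + 1) (16 / (eps * d ^ 3) + 1))))) as [N HN].
 exists N. intros n Hn. specialize (HN n Hn).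
 assert (M1 := Rmax_l 2 (Rmax (8 / d + 1) (Rmax ((Rabs L + 1) / d + 1) (16 / (eps * d ^ 3) + 1)))).
 assert (M2 := Rmax_r 2 (Rmax (8 / d + 1) (Rmax ((Rabs L + 1) / d + 1) (16 / (eps * d ^ 3) + 1)))).
 assert (M3 := Rmax_l (8 / d + 1) (Rmax ((Rabs L + 1) / d + 1) (16 / (eps * d ^ 3) + 1))).
 assert (M4 := Rmax_r (8 / d + 1) (Rmax ((Rabs L + 1) / d + 1) (16 / (eps * d ^ 3) + 1))).
 assert (M5 := Rmax_l ((Rabs L + 1) / d + 1) (16 / (eps * d ^ 3) + 1)).
 assert (M6 := Rmax_r ((Rabs L + 1) / d + 1) (16 / (eps * d ^ 3) + 1)).
 assert (Hn1 : (1 <= n)%nat). { apply INR_le. simpl. lra. }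
 destruct (Hk n Hn1) as [Hkn Hkl].
 rewrite deriv_val by auto. rewrite Rminus_0_r.
 assert (HB := B_nonneg (n - 1) u (k n - 1) ltac:(lra) ltac:(lia)).
 rewrite Rabs_right by (apply Rle_ge; apply Rmult_le_pos; [apply pos_INR|auto]).
 set (m := (n - 1)%nat) in *. set (a := (k n - 1)%nat) in *.
 assert (Em : INR m = INR n - 1) by (unfold m; rewrite minus_INR by lia; simpl; ring).
 assert (Ea : INR a = INR (k n) - 1) by (unfold a; rewrite minus_INR by lia; simpl; ring).
 assert (Hm1 : 1 <= INR m) by lra.
 assert (Hmd8 : 8 <= INR m * d). { assert (8 / d + 1 <= INR n) by lra.
   assert (8 / d * d = 8) by (field; lra). nra. }
 assert (HmdL : Rabs L + 1 <= INR m * d). { assert ((Rabs L + 1) / d + 1 <= INR n) by lra.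
   assert ((Rabs L + 1) / d * d = Rabs L + 1) by (field; lra). nra. }
 assert (HmdE : 16 / (eps * d ^ 3) <= INR m) by lra.
 assert (HLa := Rle_abs L). assert (HLb := Rle_abs (-L)). rewrite Rabs_Ropp in HLb.
 apply Rabs_le_inv in Hkl.
 assert (Bb : B m u a <= 8 / (INR m ^ 2 * d ^ 3)).
 { destruct (Rle_lt_dec u ga).
   - assert (Ed : d = (ga - u) / 2) by (unfold d; rewrite Rabs_right; lra).
     apply far_above; auto. lia. rewrite Ed in *. nra.
   - assert (Ed : d = (u - ga) / 2) by (unfold d; rewrite Rabs_left; lra).
     apply far_below; auto. lia. rewrite Ed in *. nra. }
 assert (HS : INR n * B m u a <= INR n * (8 / (INR m ^ 2 * d ^ 3))) by (apply Rmult_le_compat_l; [apply pos_INR|auto]).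
 apply (Rle_trans _ _ _ HS).
 replace (INR n * (8 / (INR m ^ 2 * d ^ 3))) with ((INR m + 1) / INR m * (8 / (INR m * d ^ 3))) by (rewrite Em; field; split; nra).
 apply (Rle_trans _ (2 * (8 / (INR m * d ^ 3)))).
 apply Rmult_le_compat_r. apply Rlt_le; apply Rdiv_lt_0_compat; [lra| apply Rmult_lt_0_compat; [lra|apply pow_lt; lra]].
 apply (Rmult_le_reg_l (INR m)). lra. replace (INR m * ((INR m + 1) / INR m)) with (INR m + 1) by (field; lra). lra.
 replace (2 * (8 / (INR m * d ^ 3))) with (16 / (d^3) / INR m) by (field; split; nra).
 apply (Rmult_le_reg_l (INR m)). lra. replace (INR m * (16 / d ^ 3 / INR m)) with (16 / d^3) by (field; split; nra).
 assert (16 / (eps * d ^ 3) * eps = 16 / d^3) by (field; split; nra).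
 assert (0 < d^3) by (apply pow_lt; lra). nra. Qed.

Lemma cheb_simpl n u d : 0 < u < 1 -> 0 < d -> 0 < INR n ->
  INR n * u * (1 - u) / (INR n * d) ^ 2 <= / (INR n * d ^ 2).
Proof. intros Hu Hd Hn. replace (INR n * u * (1 - u) / (INR n * d) ^ 2) with ((u * (1 - u)) * / (INR n * d ^ 2)) by (field; nra).
 assert (u * (1 - u) <= 1/4) by (assert (0 <= (u - 1/2)^2) by apply pow2_ge_0; nra).
 assert (0 < / (INR n * d ^ 2)) by (apply Rinv_0_lt_compat; apply Rmult_lt_0_compat; [auto|apply pow_lt; auto]).
 rewrite <- (Rmult_1_l (/ (INR n * d ^ 2))) at 2. apply Rmult_le_compat_r; lra. Qed.

Lemma val_far u ga L (k : nat -> nat) : 0 < u < 1 -> u <> ga ->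
  (forall n, (1 <= n)%nat -> Rabs (INR (k n) - INR n * ga) <= L) ->
  is_lim_seq (fun n => Tl n u (k n)) (Finite (if Rlt_dec ga u then 1 else 0)).
Proof. intros Hu Hne Hk. apply lim_eps. intros eps Heps.
 set (d := Rabs (ga - u) / 2).
 assert (Hd : 0 < d). { unfold d. assert (ga - u <> 0) by lra. assert (0 < Rabs (ga - u)) by (apply Rabs_pos_lt; auto). lra. }
 destruct (big_n (Rmax 2 (Rmax ((Rabs L + 1) / d + 1) (/ (eps * d ^ 2) + 1)))) as [N HN].
 exists N. intros n Hn. specialize (HN n Hn).
 assert (M1 := Rmax_l 2 (Rmax ((Rabs L + 1) / d + 1) (/ (eps * d ^ 2) + 1))).
 assert (M2 := Rmax_r 2 (Rmax ((Rabs L + 1) / d + 1) (/ (eps * d ^ 2) + 1))).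
 assert (M5 := Rmax_l ((Rabs L + 1) / d + 1) (/ (eps * d ^ 2) + 1)).
 assert (M6 := Rmax_r ((Rabs L + 1) / d + 1) (/ (eps * d ^ 2) + 1)).
 assert (Hn1 : (1 <= n)%nat). { apply INR_le. simpl. lra. }
 specialize (Hk n Hn1). apply Rabs_le_inv in Hk.
 assert (HmdL : Rabs L + 1 <= INR n * d). { assert ((Rabs L + 1) / d + 1 <= INR n) by lra.
   assert ((Rabs L + 1) / d * d = Rabs L + 1) by (field; lra). nra. }
 assert (HLa := Rle_abs L). assert (HLb := Rle_abs (-L)). rewrite Rabs_Ropp in HLb.
 assert (Hfin : / (INR n * d ^ 2) <= eps).
 { assert (0 < d^2) by (apply pow_lt; lra).
   apply (Rmult_le_reg_l (INR n * d ^ 2)). nra. rewrite Rinv_r by nra.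
   assert (/ (eps * d ^ 2) * (eps * d^2) = 1) by (field; nra).
   assert ((/ (eps * d ^ 2) + 1) * (eps * d^2) <= INR n * (eps * d^2)) by (apply Rmult_le_compat_r; nra).
   nra. }
 assert (Hnp : 0 < INR n) by lra.
 destruct (Rlt_dec ga u).
 - assert (Ed : d = (u - ga) / 2) by (unfold d; rewrite Rabs_left; lra).
   assert (C := Tl_compl n u (k n)).
   assert (Cb : sumr (fun x => (if Nat.leb (k n) x then 0 else 1) * B n u x) (S n) <= INR n * u * (1 - u) / (INR n * d) ^ 2).
   { apply cheb. lra. nra. intros x _. destruct (Nat.leb (k n) x); lra.
     intros x _ Hw. destruct (Nat.leb_spec (k n) x). lra. apply lt_INR in H.
     rewrite Rabs_left. rewrite Ed in *. nra. rewrite Ed in *. nra. }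
   assert (Hs := cheb_simpl n u d Hu Hd Hnp). assert (HT := Tl_range n u (k n) ltac:(lra)).
   rewrite Rabs_left1 by lra. lra.
 - assert (Ed : d = (ga - u) / 2) by (unfold d; rewrite Rabs_right; lra).
   assert (C := Tl_as n u (k n)).
   assert (Cb : sumr (fun x => (if Nat.leb (k n) x then 1 else 0) * B n u x) (S n) <= INR n * u * (1 - u) / (INR n * d) ^ 2).
   { apply cheb. lra. nra. intros x _. destruct (Nat.leb (k n) x); lra.
     intros x _ Hw. destruct (Nat.leb_spec (k n) x). 2: lra. apply le_INR in H.
     rewrite Rabs_right. rewrite Ed in *. nra. rewrite Ed in *. nra. }
   assert (Hs := cheb_simpl n u d Hu Hd Hnp). assert (HT := Tl_range n u (k n) ltac:(lra)).
   rewrite Rminus_0_r, Rabs_right by lra. lra. Qed.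

Lemma pmf_bound2 n p a : 0 < p < 1 -> (a <= n)%nat -> (1 <= n)%nat ->
  B n p a <= / sqrt (INR n * p * (1 - p)).
Proof. intros Hp Ha Hn. eapply Rle_trans. apply pmf_bound; auto.
 assert (0 < INR n) by (apply lt_0_INR; lia).
 apply Rinv_le_contravar. apply sqrt_lt_R0. apply Rmult_lt_0_compat. nra. lra.
 apply sqrt_le_1_alt. rewrite S_INR. apply Rmult_le_compat_r. lra. nra. Qed.

Lemma absY_lower n p T a0 d : 0 < p < 1 -> (1 <= n)%nat -> 0 < T ->
  INR a0 <= INR n * p - T -> INR n * p + T < INR a0 + INR d ->
  T * (1 - INR d * / sqrt (INR n * p * (1 - p))) <=
  sumr (fun x => Rabs (INR x - INR n * p) * B n p x) (S n).
Proof. intros Hp Hn HT H1 H2.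
 set (M := / sqrt (INR n * p * (1 - p))).
 assert (HM : 0 <= M). { unfold M. left. apply Rinv_0_lt_compat. apply sqrt_lt_R0.
   assert (0 < INR n) by (apply lt_0_INR; lia). apply Rmult_lt_0_compat. nra. lra. }
 assert (D := G_diff_le n (B n p) M a0 d HM (fun x Hx => conj (B_nonneg n p x ltac:(lra) Hx) (pmf_bound2 n p x Hp Hx Hn))).
 set (w := fun x => (if Nat.leb a0 x then 1 else 0) - (if Nat.leb (a0 + d) x then 1 else 0)).
 assert (Ew : G n (B n p) a0 - G n (B n p) (a0 + d) = sumr (fun x => w x * B n p x) (S n)).
 { unfold G. rewrite <- sumr_minus. apply sumr_ext. intros i Hi. unfold w.
   destruct (Nat.leb a0 i), (Nat.leb (a0+d) i); ring. }
 apply (Rle_trans _ (sumr (fun x => T * (1 - w x) * B n p x) (S n))).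
 - rewrite (sumr_ext _ (fun x => T * B n p x - T * (w x * B n p x))) by (intros; ring).
   rewrite sumr_minus, !sumr_scal, B_sum, <- Ew.
   assert (T * (G n (B n p) a0 - G n (B n p) (a0 + d)) <= T * (INR d * M)) by (apply Rmult_le_compat_l; lra).
   lra.
 - apply sumr_le. intros x Hx. assert (HB := B_nonneg n p x ltac:(lra) ltac:(lia)).
   apply Rmult_le_compat_r. auto. unfold w.
   destruct (Nat.leb_spec a0 x), (Nat.leb_spec (a0 + d) x).
   + apply le_INR in H0. rewrite plus_INR in H0. rewrite Rabs_right; lra.
   + assert (0 <= Rabs (INR x - INR n * p)) by apply Rabs_pos. lra.
   + lia.
   + apply lt_INR in H. rewrite Rabs_left; lra. Qed.

Lemma trunc_lower n p k L : 0 < p < 1 -> Rabs (INR k - INR n * p) <= L ->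
  sumr (fun x => Rabs (INR x - INR n * p) * B n p x) (S n) / 2 - L <=
  G n (fun x => (INR x - INR n * p) * B n p x) k.
Proof. intros Hp Hk. apply Rabs_le_inv in Hk.
 apply (Rle_trans _ (sumr (fun x => ((Rabs (INR x - INR n * p) + (INR x - INR n * p)) / 2 - L) * B n p x) (S n))).
 - rewrite (sumr_ext (fun x => ((Rabs (INR x - INR n * p) + (INR x - INR n * p)) / 2 - L) * B n p x) (fun x => / 2 * (Rabs (INR x - INR n * p) * B n p x) + / 2 * ((INR x - INR n * p) * B n p x) - L * B n p x)) by (intros; field).
   rewrite sumr_minus, sumr_plus, !sumr_scal, B_center, B_sum. lra.
 - unfold G. apply sumr_le. intros x Hx. assert (HB := B_nonneg n p x ltac:(lra) ltac:(lia)).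
   destruct (Nat.leb_spec k x).
   + apply Rmult_le_compat_r. auto. apply le_INR in H.
     destruct (Rle_dec 0 (INR x - INR n * p)). rewrite Rabs_right; lra. rewrite Rabs_left; lra.
   + apply lt_INR in H. assert (Hc : (Rabs (INR x - INR n * p) + (INR x - INR n * p)) / 2 - L <= 0).
     { destruct (Rle_dec 0 (INR x - INR n * p)). rewrite Rabs_right; lra. rewrite Rabs_left; lra. }
     nra. Qed.

Lemma deriv_center p L (k : nat -> nat) : 0 < p < 1 ->
  (forall n, (1 <= n)%nat -> Rabs (INR (k n) - INR n * p) <= L) ->
  is_lim_seq (fun n => / (p * (1 - p)) * G n (fun x => (INR x - INR n * p) * B n p x) (k n)) p_infty.
Proof. intros Hp Hk. apply lim_pinf. intros Mt.
 set (S0 := 16 * (Rabs Mt + 1 + Rabs L) + 8).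
 assert (HS0 : 8 <= S0) by (unfold S0; assert (0 <= Rabs Mt) by apply Rabs_pos; assert (0 <= Rabs L) by apply Rabs_pos; lra).
 assert (Hpq : 0 < p * (1 - p)) by nra.
 destruct (big_n (Rmax (/ p + 1) (S0 * S0 / (p * (1 - p)) + 1))) as [N HN].
 exists N. intros n Hn. specialize (HN n Hn).
 assert (M1 := Rmax_l (/ p + 1) (S0 * S0 / (p * (1 - p)) + 1)).
 assert (M2 := Rmax_r (/ p + 1) (S0 * S0 / (p * (1 - p)) + 1)).
 assert (Hn1 : (1 <= n)%nat). { apply INR_le. simpl. assert (0 < / p) by (apply Rinv_0_lt_compat; lra). lra. }
 assert (Hnp : 1 <= INR n * p). { assert (/ p * p = 1) by (field; lra).
   assert ((/ p + 1) * p <= INR n * p) by (apply Rmult_le_compat_r; lra). lra. }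
 set (v := INR n * p * (1 - p)).
 assert (Hv : 0 < v) by (unfold v; nra).
 set (s := sqrt v).
 assert (Hss : s * s = v) by (apply sqrt_sqrt; lra).
 assert (Hs0 : 0 < s) by (apply sqrt_lt_R0; auto).
 assert (HsS : S0 <= s).
 { assert (S0 * S0 <= v). { assert (S0 * S0 / (p * (1 - p)) * (p * (1 - p)) = S0 * S0) by (field; lra).
     unfold v. assert ((S0 * S0 / (p * (1 - p))) * (p * (1-p)) <= INR n * (p * (1 - p))) by (apply Rmult_le_compat_r; lra).
     lra. }
   nra. }
 assert (Hsnp : s <= INR n * p).
 { assert (v <= INR n * p) by (unfold v; nra). nra. }
 set (T := s / 4 - 1).
 destruct (nat_floor (INR n * p - T)) as [a0 Ha0]. unfold T; lra.
 destruct (nat_floor (2 * T + 2)) as [d Hd]. unfold T; lra.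
 assert (HA := absY_lower n p T a0 d Hp Hn1 ltac:(unfold T; lra) ltac:(lra) ltac:(lra)).
 fold v in HA. fold s in HA.
 assert (Hdm : INR d * / s <= 1/2).
 { apply (Rmult_le_reg_l s). auto. replace (s * (INR d * / s)) with (INR d) by (field; lra). unfold T in Hd. lra. }
 assert (HA2 : T / 2 <= sumr (fun x => Rabs (INR x - INR n * p) * B n p x) (S n)).
 { assert (T * (1/2) <= T * (1 - INR d * / s)) by (apply Rmult_le_compat_l; unfold T; lra). lra. }
 assert (HT := trunc_lower n p (k n) L Hp (Hk n Hn1)).
 assert (Hfin : Mt <= s / 16 - 1/4 - L).
 { assert (HMt := Rle_abs Mt). assert (HLL := Rle_abs L). unfold S0 in HS0, HsS. lra. }
 assert (HG : s / 16 - 1/4 - L <= G n (fun x => (INR x - INR n * p) * B n p x) (k n)) by (unfold T in HA2; lra).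
 assert (Hi : 4 <= / (p * (1 - p))).
 { apply (Rmult_le_reg_l (p * (1 - p))). auto. rewrite Rinv_r by lra.
   assert (0 <= (p - 1/2)^2) by apply pow2_ge_0. nra. }
 assert (0 <= s / 16 - 1/4 - L).
 { assert (HLL := Rle_abs L). assert (0 <= Rabs Mt) by apply Rabs_pos. unfold S0 in HsS. lra. }
 nra. Qed.

Lemma Tl_lip n p M a b : 0 < p < 1 -> 0 <= M -> (forall x, (x <= n)%nat -> B n p x <= M) ->
  Rabs (Tl n p a - Tl n p b) <= Rabs (INR a - INR b) * M.
Proof. intros Hp HM HB.
 assert (HF : forall x, (x <= n)%nat -> 0 <= B n p x <= M) by (intros; split; [apply B_nonneg; [lra|auto]|auto]).
 unfold Tl. destruct (Nat.le_ge_cases a b).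
 - replace b with (a + (b - a))%nat by lia. assert (D := G_diff_le n (B n p) M a (b - a) HM HF).
   rewrite Rabs_right by lra. rewrite plus_INR, minus_INR by lia.
   replace (INR a - (INR a + (INR b - INR a))) with (- (INR b - INR a)) by ring. rewrite Rabs_Ropp.
   rewrite Rabs_right. rewrite minus_INR in D by lia. lra. apply Rle_ge. apply le_INR in H. lra.
 - replace a with (b + (a - b))%nat by lia. assert (D := G_diff_le n (B n p) M b (a - b) HM HF).
   rewrite Rabs_left1 by lra. rewrite plus_INR, minus_INR by lia.
   replace (INR b + (INR a - INR b) - INR b) with (INR a - INR b) by ring.
   rewrite Rabs_right. rewrite minus_INR in D by lia. lra. apply Rle_ge. apply le_INR in H. lra. Qed.

Fixpoint prodr (f : nat -> R) (d : nat) : R :=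
  match d with O => 1 | S d' => prodr f d' * f d' end.

Lemma prod_bound f e d : 0 <= e -> (forall i, (i < d)%nat -> Rabs (f i - 1) <= e) ->
  Rabs (prodr f d - 1) <= (1 + e) ^ d - 1.
Proof. intros He. induction d; intros H. simpl. rewrite Rminus_diag, Rabs_R0. lra.
 simpl prodr. assert (IH := IHd ltac:(intros; apply H; lia)). assert (Hd := H d ltac:(lia)).
 replace (prodr f d * f d - 1) with ((prodr f d - 1) * f d + (f d - 1)) by ring.
 eapply Rle_trans. apply Rabs_triang. rewrite Rabs_mult.
 assert (Rabs (f d) <= 1 + e). { replace (f d) with ((f d - 1) + 1) by ring. eapply Rle_trans. apply Rabs_triang. rewrite Rabs_R1. lra. }
 assert (Rabs (prodr f d - 1) * Rabs (f d) <= ((1 + e) ^ d - 1) * (1 + e)) by (apply Rmult_le_compat; auto; apply Rabs_pos).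
 simpl pow. lra. Qed.

Lemma bernoulli_inv e d : 0 <= e -> (1 + e) ^ d * (1 - INR d * e) <= 1.
Proof. intros He. induction d. simpl. lra.
 rewrite S_INR. simpl pow.
 assert (0 <= (1 + e) ^ d) by (apply pow_le; lra).
 assert ((1 + e) * (1 + e) ^ d * (1 - (INR d + 1) * e) = (1 + e) ^ d * (1 - INR d * e) - (1 + e)^d * (INR d * e * e + e * e)) by ring.
 assert (0 <= INR d) by apply pos_INR.
 assert (0 <= (1 + e)^d * (INR d * e * e + e * e)) by (apply Rmult_le_pos; nra). lra. Qed.

Lemma prod_bound2 f e d : 0 <= e -> INR d * e <= 1/2 -> (forall i, (i < d)%nat -> Rabs (f i - 1) <= e) ->
  Rabs (prodr f d - 1) <= 2 * INR d * e.
Proof. intros He Hde H. eapply Rle_trans. apply prod_bound; eauto.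
 assert (Hb := bernoulli_inv e d He). assert (0 <= INR d) by apply pos_INR.
 assert (0 <= (1 + e) ^ d) by (apply pow_le; lra).
 (* (1+e)^d <= 1/(1 - de) <= 1 + 2de *)
 assert ((1 + e) ^ d <= 1 + 2 * INR d * e).
 { assert (X : (1 + e)^d * (1 - INR d * e) * (1 + 2 * INR d * e) <= 1 * (1 + 2 * INR d * e)).
   { apply Rmult_le_compat_r. nra. exact Hb. }
   assert (Y : 1 <= (1 - INR d * e) * (1 + 2 * INR d * e)) by (assert (0 <= INR d * e) by (apply Rmult_le_pos; lra); nra).
   assert (Z : (1 + e)^d * 1 <= (1 + e)^d * ((1 - INR d * e) * (1 + 2 * INR d * e))) by (apply Rmult_le_compat_l; auto).
   rewrite <- Rmult_assoc in Z. lra. }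
 lra. Qed.

Definition rr n p a := (INR n - INR a) * p / ((INR a + 1) * (1 - p)).

Lemma pair_eq n p c d : p < 1 -> (d <= c)%nat -> (c + d <= n)%nat ->
  B n p (c + d) = B n p (c - d) * prodr (fun i => rr n p (c + i) * rr n p (c - 1 - i)) d.
Proof. intros Hp. induction d; intros H1 H2. simpl. rewrite Nat.add_0_r, Nat.sub_0_r. ring.
 simpl prodr. replace (c + S d)%nat with (S (c + d)) by lia. rewrite B_ratio by (lia || lra).
 rewrite IHd by lia. replace (c - d)%nat with (S (c - S d)) by lia. rewrite B_ratio by (lia || lra).
 replace (c - 1 - d)%nat with (c - S d)%nat by lia. unfold rr. ring. Qed.
Lemma numden_bound n p d i : 0 < p < 1 -> -1 < d <= 0 -> 0 <= n -> 0 <= i ->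
 Rabs (- d * (2*n*p*(1-p) + ((1-p) - p) * d) + n*p*(1-p)*(p - (1-p)) - d * (p^2 + (1-p)^2) - (i + i^2) * (p - (1-p))) <= n + 3 + 2 * i^2.
Proof. intros. assert (p * (1-p) <= 1/4) by (assert (0 <= (p - 1/2)^2) by apply pow2_ge_0; nra).
assert (E : - d * (2*n*p*(1-p) + ((1-p) - p) * d) + n*p*(1-p)*(p - (1-p)) - d * (p^2 + (1-p)^2) - (i + i^2) * (p - (1-p))
  = -2*(n * p * (1-p))*d - (1 - p - p) * d * d + (n * p * (1-p)) * (p - (1-p)) + (- d * (p^2 + (1-p)^2)) - (i + i^2) * (p - (1-p))) by ring.
rewrite E.
set (w := n * p * (1-p)). assert (0 <= w) by (unfold w; assert (0 <= p*(1-p)) by nra; nra).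
assert (w <= n/4) by (unfold w; nra).
assert (0 <= -2*w*d <= 2*w) by nra.
assert (-1 <= (1 - p - p) * d * d <= 1) by nra.
assert (-w <= w * (p - (1-p)) <= w) by nra.
assert (0 <= - d * (p^2 + (1-p)^2) <= 1) by nra.
assert (-(i + i^2) <= (i + i^2) * (p - (1-p)) <= i + i^2) by nra.
assert (i <= 1 + i^2) by nra.
apply Rabs_le. 
set (t1 := -2*w*d) in *. set (t2 := (1 - p - p) * d * d) in *. set (t3 := w * (p - (1-p))) in *.
set (t4 := - d * (p^2 + (1-p)^2)) in *. set (t5 := (i + i^2) * (p - (1-p))) in *. set (t6 := i^2) in *. lra. Qed.

Lemma factor_bound n p c i J : 0 < p < 1 -> INR c <= INR n * p < INR c + 1 ->
  (i < J)%nat -> (J <= c)%nat -> INR J + 1 <= INR n * p / 2 -> 0 < INR n ->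
  Rabs (rr n p (c + i) * rr n p (c - 1 - i) - 1) <= 4 * (INR n + 3 + 2 * INR J ^ 2) / (p ^ 2 * (1 - p) ^ 2 * INR n ^ 2).
Proof. intros Hp Hc Hi HJc HJ Hn.
 assert (E1 : INR (c + i) = INR c + INR i) by apply plus_INR.
 assert (E2 : INR (c - 1 - i) = INR c - 1 - INR i) by (rewrite !minus_INR by lia; simpl; ring).
 assert (HiJ : INR i + 1 <= INR J) by (rewrite <- S_INR; apply le_INR; lia).
 assert (Hi0 : 0 <= INR i) by apply pos_INR.
 set (ci := INR c) in *. set (ii := INR i) in *. set (d := ci - INR n * p).
 assert (Hd : -1 < d <= 0) by (unfold d; lra).
 assert (HA1 : INR n * p / 2 <= ci - ii) by lra.
 assert (Hnp : 0 < INR n * p) by nra.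
 unfold rr. rewrite E1, E2.
 set (Num := p ^ 2 * (INR n - ci - ii) * (INR n - ci + 1 + ii)).
 set (Den := (1 - p) ^ 2 * (ci + ii + 1) * (ci - ii)).
 assert (HDen : (1 - p) ^ 2 * ((INR n * p / 2) * (INR n * p / 2)) <= Den).
 { unfold Den. rewrite Rmult_assoc. apply Rmult_le_compat_l. apply pow_le; lra.
   apply Rmult_le_compat; lra. }
 assert (HDp : 0 < (1 - p) ^ 2 * ((INR n * p / 2) * (INR n * p / 2))).
 { apply Rmult_lt_0_compat. apply pow_lt; lra. nra. }
 assert (E : (INR n - (ci + ii)) * p / ((ci + ii + 1) * (1 - p)) * ((INR n - (ci - 1 - ii)) * p / ((ci - 1 - ii + 1) * (1 - p))) - 1
   = (Num - Den) / Den).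
 { unfold Num, Den. field. repeat split; lra. }
 rewrite E.
 assert (ENum : Num - Den = - d * (2*INR n*p*(1-p) + ((1-p) - p) * d) + INR n*p*(1-p)*(p - (1-p)) - d * (p^2 + (1-p)^2) - (ii + ii^2) * (p - (1-p))).
 { unfold Num, Den, d. ring. }
 rewrite ENum. unfold Rdiv. rewrite Rabs_mult, (Rabs_right (/ Den)) by (apply Rle_ge; left; apply Rinv_0_lt_compat; lra).
 assert (NB := numden_bound (INR n) p d ii Hp Hd ltac:(lra) Hi0).
 assert (HiJ2 : ii ^ 2 <= INR J ^ 2) by (apply pow_incr; lra).
 apply (Rle_trans _ ((INR n + 3 + 2 * INR J ^ 2) * / Den)).
 apply Rmult_le_compat_r. left; apply Rinv_0_lt_compat; lra. lra.
 apply (Rle_trans _ ((INR n + 3 + 2 * INR J ^ 2) * / ((1 - p) ^ 2 * ((INR n * p / 2) * (INR n * p / 2))))).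
 apply Rmult_le_compat_l. assert (0 <= INR J ^ 2) by apply pow2_ge_0. lra.
 apply Rinv_le_contravar; auto.
 right. field. split; lra. Qed.

Lemma sym_bound n p c J : 0 < p < 1 -> (1 <= n)%nat -> INR c <= INR n * p < INR c + 1 ->
  (1 <= J)%nat -> (J <= c)%nat -> (c + J <= n)%nat -> INR J + 1 <= INR n * p / 2 ->
  INR J * (4 * (INR n + 3 + 2 * INR J ^ 2) / (p ^ 2 * (1 - p) ^ 2 * INR n ^ 2)) <= 1/2 ->
  Rabs (Tl n p (S c) - (1 - Tl n p c)) <=
    2 * INR J * (4 * (INR n + 3 + 2 * INR J ^ 2) / (p ^ 2 * (1 - p) ^ 2 * INR n ^ 2)) + 2 * (INR n * p * (1 - p) / INR J ^ 2).
Proof. intros Hp Hn Hc HJ1 HJc HJn HJ Hes.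
 set (e := 4 * (INR n + 3 + 2 * INR J ^ 2) / (p ^ 2 * (1 - p) ^ 2 * INR n ^ 2)) in *.
 assert (Hn0 : 0 < INR n) by (apply lt_0_INR; lia).
 assert (He : 0 <= e). { unfold e. apply Rmult_le_pos. assert (0 <= INR J ^ 2) by apply pow2_ge_0. lra.
   left; apply Rinv_0_lt_compat. apply Rmult_lt_0_compat. apply Rmult_lt_0_compat; apply pow_lt; lra. apply pow_lt; lra. }
 assert (HJ0 : 1 <= INR J) by (apply (le_INR 1); auto).
 unfold Tl.
 assert (W1 := G_window n (B n p) (S c) J ltac:(lia)).
 assert (W2 := G_window n (B n p) (c - J) J ltac:(lia)).
 replace (c - J + J)%nat with c in W2 by lia.
 rewrite sumr_rev in W2.
 rewrite (sumr_ext _ (fun j => B n p (c - 1 - j))) in W2 by (intros; f_equal; lia).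
 assert (R1 := Tl_range n p (S c + J) ltac:(lra)). assert (R2 := Tl_range n p (c - J) ltac:(lra)).
 assert (R3 := Tl_range n p c ltac:(lra)). unfold Tl in R1, R2, R3.
 assert (P : Rabs (sumr (fun j => B n p (S c + j)) J - sumr (fun j => B n p (c - 1 - j)) J) <= 2 * INR J * e).
 { rewrite <- sumr_minus. eapply Rle_trans. apply sumr_abs.
   apply (Rle_trans _ (sumr (fun j => (2 * INR J * e) * B n p (c - 1 - j)) J)).
   - apply sumr_le. intros j Hj.
     assert (PE := pair_eq n p c (S j) ltac:(lra) ltac:(lia) ltac:(lia)).
     replace (c + S j)%nat with (S c + j)%nat in PE by lia. replace (c - S j)%nat with (c - 1 - j)%nat in PE by lia.
     rewrite PE. assert (HB := B_nonneg n p (c - 1 - j) ltac:(lra) ltac:(lia)).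
     replace (B n p (c - 1 - j) * prodr (fun i => rr n p (c + i) * rr n p (c - 1 - i)) (S j) - B n p (c - 1 - j))
       with (B n p (c - 1 - j) * (prodr (fun i => rr n p (c + i) * rr n p (c - 1 - i)) (S j) - 1)) by ring.
     rewrite Rabs_mult, Rabs_right by lra. rewrite Rmult_comm. apply Rmult_le_compat_r. auto.
     assert (HSj : INR (S j) <= INR J) by (apply le_INR; lia).
     eapply Rle_trans. apply (prod_bound2 _ e). auto. assert (INR (S j) * e <= INR J * e) by (apply Rmult_le_compat_r; auto). lra.
     intros i Hi. apply factor_bound; auto; lia.
     assert (INR (S j) * e <= INR J * e) by (apply Rmult_le_compat_r; auto). lra.
   - rewrite sumr_scal, <- W2. assert (0 <= 2 * INR J * e) by (apply Rmult_le_pos; lra).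
     assert ((2 * INR J * e) * (G n (B n p) (c - J) - G n (B n p) c) <= (2 * INR J * e) * 1) by (apply Rmult_le_compat_l; lra).
     lra. }
 assert (T1 : G n (B n p) (S c + J) <= INR n * p * (1 - p) / INR J ^ 2).
 { assert (E := Tl_as n p (S c + J)). unfold Tl in E. rewrite E. apply cheb. lra. lra.
   intros x _. destruct (Nat.leb (S c + J) x); lra.
   intros x _ Hw. destruct (Nat.leb_spec (S c + J) x). 2: lra. apply le_INR in H. rewrite plus_INR, S_INR in H.
   rewrite Rabs_right; lra. }
 assert (T2 : 1 - G n (B n p) (c - J) <= INR n * p * (1 - p) / INR J ^ 2).
 { assert (E := Tl_compl n p (c - J)). unfold Tl in E. rewrite E. apply cheb. lra. lra.
   intros x _. destruct (Nat.leb (c - J) x); lra.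
   intros x _ Hw. destruct (Nat.leb_spec (c - J) x). lra. apply lt_INR in H. rewrite minus_INR in H by lia.
   rewrite Rabs_left; lra. }
 assert (T0 : 0 <= INR n * p * (1 - p) / INR J ^ 2). { apply Rmult_le_pos. apply Rmult_le_pos. nra. lra.
   left; apply Rinv_0_lt_compat; apply pow_lt; lra. }
 replace (G n (B n p) (S c) - (1 - G n (B n p) c)) with
   ((sumr (fun j => B n p (S c + j)) J - sumr (fun j => B n p (c - 1 - j)) J) + G n (B n p) (S c + J) - (1 - G n (B n p) (c - J))) by lra.
 eapply Rle_trans. apply Rabs_triang. eapply Rle_trans. apply Rplus_le_compat_l. rewrite Rabs_Ropp. apply Rle_refl.
 eapply Rle_trans. apply Rplus_le_compat_r. apply Rabs_triang.
 rewrite (Rabs_right (G n (B n p) (S c + J))) by lra. rewrite (Rabs_right (1 - _)) by lra. lra. Qed.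

Lemma big_sqrt c : exists N, forall n, (N <= n)%nat -> c <= sqrt (INR n).
Proof. destruct (big_n (Rmax c 0 * Rmax c 0)) as [N HN]. exists N. intros n Hn.
 assert (H := HN n Hn). assert (0 <= Rmax c 0) by apply Rmax_r. assert (c <= Rmax c 0) by apply Rmax_l.
 assert (sqrt (Rmax c 0 * Rmax c 0) <= sqrt (INR n)) by (apply sqrt_le_1_alt; auto).
 rewrite sqrt_square in H2 by auto. lra. Qed.

Lemma val_center p L (k : nat -> nat) : 0 < p < 1 ->
  (forall n, (1 <= n)%nat -> Rabs (INR (k n) - INR n * p) <= L) ->
  is_lim_seq (fun n => Tl n p (k n)) (1/2).
Proof. intros Hp Hk. apply lim_eps. intros eps Heps.
 set (a := 4 / eps + 4).
 assert (Ha : 4 <= a) by (unfold a; assert (0 < 4 / eps) by (apply Rdiv_lt_0_compat; lra); lra).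
 assert (Ha2 : 2 / a ^ 2 <= eps / 8).
 { assert (16 / eps <= a ^ 2). { assert (4 / eps <= a) by (unfold a; lra).
     replace (16 / eps) with (4 * (4 / eps)) by (field; lra). simpl. nra. }
   apply (Rmult_le_reg_l (a^2)). nra. replace (a ^ 2 * (2 / a ^ 2)) with 2 by (field; lra).
   assert (16 / eps * eps = 16) by (field; lra). nra. }
 set (pq := p * (1 - p)).
 assert (Hpq : 0 < pq) by (unfold pq; nra).
 set (K := 4 * (4 + 2 * a ^ 2) / (p ^ 2 * (1 - p) ^ 2)).
 assert (HK : 0 < K). { unfold K. apply Rdiv_lt_0_compat. nra. apply Rmult_lt_0_compat; apply pow_lt; lra. }
 assert (Hsq : 0 < sqrt pq) by (apply sqrt_lt_R0; auto).
 destruct (big_sqrt 1) as [N1 H1].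
 destruct (big_sqrt (2 / a)) as [N2 H2].
 destruct (big_sqrt ((2 * a + 2) / p)) as [N3 H3].
 destruct (big_sqrt (a / (1 - p))) as [N4 H4].
 destruct (big_sqrt (2 * a * K)) as [N5 H5].
 destruct (big_sqrt (16 * a * K / eps)) as [N6 H6].
 destruct (big_sqrt (4 * (Rabs L + 3) / (eps * sqrt pq))) as [N7 H7].
 exists (S (N1 + N2 + N3 + N4 + N5 + N6 + N7)). intros n Hn.
 specialize (H1 n ltac:(lia)). specialize (H2 n ltac:(lia)). specialize (H3 n ltac:(lia)).
 specialize (H4 n ltac:(lia)). specialize (H5 n ltac:(lia)). specialize (H6 n ltac:(lia)). specialize (H7 n ltac:(lia)).
 assert (Hn1 : (1 <= n)%nat) by lia.
 assert (Hn0 : 0 < INR n) by (apply lt_0_INR; lia).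
 set (r := sqrt (INR n)) in *.
 assert (Hrr : r * r = INR n) by (apply sqrt_sqrt; lra).
 destruct (nat_floor (INR n * p)) as [c Hc]. nra.
 destruct (nat_floor (a * r)) as [J HJ]. nra.
 assert (HJ1 : 1 <= INR J). { assert (2 / a * a = 2) by (field; lra). nra. }
 assert (HJr : a * r / 2 <= INR J) by (assert (2 / a * a = 2) by (field; lra); nra).
 assert (Hp2 : a * r + 1 <= INR n * p / 2).
 { assert ((2 * a + 2) / p * p = 2 * a + 2) by (field; lra).
   assert ((2 * a + 2) <= r * p) by nra. rewrite <- Hrr. nra. }
 assert (Hq2 : a * r <= INR n * (1 - p)).
 { assert (a / (1 - p) * (1 - p) = a) by (field; lra). assert (a <= r * (1 - p)) by nra. rewrite <- Hrr. nra. }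
 assert (HJc : (J <= c)%nat) by (apply INR_le; lra).
 assert (HJn : (c + J <= n)%nat) by (apply INR_le; rewrite plus_INR; lra).
 set (e := 4 * (INR n + 3 + 2 * INR J ^ 2) / (p ^ 2 * (1 - p) ^ 2 * INR n ^ 2)).
 assert (HJ2 : INR J ^ 2 <= a ^ 2 * INR n). { rewrite <- Hrr. assert (0 <= INR J) by apply pos_INR. nra. }
 assert (He : e <= K / INR n).
 { unfold e, K. unfold Rdiv. 
   replace (4 * (4 + 2 * a ^ 2) * / (p ^ 2 * (1 - p) ^ 2) * / INR n) with
     (4 * ((4 + 2 * a ^ 2) * INR n) * / (p ^ 2 * (1 - p) ^ 2 * INR n ^ 2)) by (field; split; lra).
   apply Rmult_le_compat_r. left; apply Rinv_0_lt_compat. apply Rmult_lt_0_compat. apply Rmult_lt_0_compat; apply pow_lt; lra. apply pow_lt; lra.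
   assert (1 <= INR n) by (apply (le_INR 1); auto). nra. }
 assert (He0 : 0 <= e). { unfold e. apply Rmult_le_pos. assert (0 <= INR J ^ 2) by apply pow2_ge_0. lra.
   left; apply Rinv_0_lt_compat. apply Rmult_lt_0_compat. apply Rmult_lt_0_compat; apply pow_lt; lra. apply pow_lt; lra. }
 assert (HJe : INR J * e <= a * K / r).
 { apply (Rle_trans _ (a * r * (K / INR n))). apply Rmult_le_compat; try lra.
   rewrite <- Hrr. right. field. lra. }
 assert (HJe1 : INR J * e <= 1 / 2).
 { eapply Rle_trans. apply HJe. apply (Rmult_le_reg_l r). lra.
   replace (r * (a * K / r)) with (a * K) by (field; lra). lra. }
 assert (HJe2 : 2 * INR J * e <= eps / 8).
 { apply (Rle_trans _ (2 * (a * K / r))). lra. apply (Rmult_le_reg_l r). lra.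
   replace (r * (2 * (a * K / r))) with (2 * a * K) by (field; lra).
   assert (16 * a * K / eps * eps = 16 * a * K) by (field; lra). nra. }
 assert (Htail : 2 * (INR n * p * (1 - p) / INR J ^ 2) <= eps / 8).
 { apply (Rle_trans _ (2 / a ^ 2)); auto.
   assert (HJ2' : a ^ 2 * INR n / 4 <= INR J ^ 2). { rewrite <- Hrr. assert (0 <= a * r / 2) by nra. 
     assert ((a * r / 2) ^ 2 <= INR J ^ 2) by (apply pow_incr; lra). nra. }
   assert (pq <= 1/4) by (unfold pq; assert (0 <= (p - 1/2)^2) by apply pow2_ge_0; nra).
   apply Rmult_le_compat_l. lra. apply (Rmult_le_reg_l (INR J ^ 2)). nra.
   replace (INR J ^ 2 * (INR n * p * (1 - p) / INR J ^ 2)) with (INR n * pq) by (unfold pq; field; nra).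
   apply (Rmult_le_reg_l (a^2)). nra. replace (a ^ 2 * (INR J ^ 2 * / a ^ 2)) with (INR J ^ 2) by (field; nra).
   nra. }
 assert (SB := sym_bound n p c J Hp Hn1 Hc ltac:(apply (INR_le 1); auto) HJc HJn ltac:(lra) HJe1).
 fold e in SB.
 set (M := / sqrt (INR n * p * (1 - p))).
 assert (HMb : forall x, (x <= n)%nat -> B n p x <= M) by (intros; apply pmf_bound2; auto).
 assert (HM0 : 0 <= M) by (eapply Rle_trans; [apply (B_nonneg n p 0); lia || lra | apply HMb; lia]).
 assert (HMe : (Rabs L + 3) * M <= eps / 4).
 { unfold M. replace (INR n * p * (1 - p)) with (INR n * pq) by (unfold pq; ring).
   rewrite sqrt_mult by lra. fold r. 
   assert (0 < r * sqrt pq) by nra.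
   apply (Rmult_le_reg_l (r * sqrt pq)). auto. replace (r * sqrt pq * ((Rabs L + 3) * / (r * sqrt pq))) with (Rabs L + 3) by (field; lra).
   assert (4 * (Rabs L + 3) / (eps * sqrt pq) * (eps * sqrt pq) = 4 * (Rabs L + 3)) by (field; lra).
   assert (0 <= eps * sqrt pq) by nra. nra. }
 assert (Lip := Tl_lip n p M (k n) (S c) Hp HM0 HMb).
 assert (Hkc : Rabs (INR (k n) - INR (S c)) <= Rabs L + 1).
 { assert (Hkn := Hk n Hn1). apply Rabs_le_inv in Hkn. assert (HLa := Rle_abs L). rewrite S_INR. apply Rabs_le. lra. }
 assert (Lip2 : Rabs (INR (k n) - INR (S c)) * M <= (Rabs L + 1) * M) by (apply Rmult_le_compat_r; auto).
 assert (Stp := G_step n (B n p) c ltac:(apply INR_le; nra)). fold (Tl n p c) (Tl n p (S c)) in Stp.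
 assert (HBc := HMb c ltac:(apply INR_le; nra)). assert (HBc0 := B_nonneg n p c ltac:(lra) ltac:(apply INR_le; nra)).
 apply Rabs_le_inv in SB. apply Rabs_le_inv in Lip.
 assert (0 <= Rabs L) by apply Rabs_pos.
 apply Rabs_le. lra. Qed.

Lemma kk_props ga g K n : 0 <= ga <= 1 -> 0 <= g <= 1 -> (1 <= n)%nat ->
  Rabs (g - ga) <= K / INR n ->
  (1 <= kk n g <= n)%nat /\ Rabs (INR (kk n g) - INR n * ga) <= Rabs K + 1.
Proof. intros Hga Hg Hn HK.
 assert (Hn0 : 1 <= INR n) by (apply (le_INR 1); auto).
 assert (E := kk_INR n g Hg). destruct (base_Int_part ((INR n - 1) * g)) as [B1 B2].
 set (z := Int_part ((INR n - 1) * g)) in *.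
 assert (Hx0 : 0 <= (INR n - 1) * g) by nra.
 assert (Hx1 : (INR n - 1) * g <= INR n - 1) by nra.
 assert (HK2 : INR n * Rabs (g - ga) <= K).
 { apply (Rmult_le_compat_l (INR n)) in HK. replace (INR n * (K / INR n)) with K in HK by (field; lra). auto. lra. }
 assert (Hab := Rabs_pos (g - ga)).
 assert (HKa := Rle_abs K).
 split.
 - split.
   + apply INR_le. rewrite E. simpl. assert (-1 < IZR z) by lra. assert (-1 < z)%Z by (apply lt_IZR; auto).
     assert (0 <= IZR z) by (apply IZR_le; lia). lra.
   + apply INR_le. rewrite E. lra.
 - rewrite E. apply Rabs_le.
   assert (Hd : -(INR n * Rabs (g - ga)) <= INR n * (g - ga) <= INR n * Rabs (g - ga)).
   { apply Rabs_le_inv. rewrite Rabs_mult, Rabs_right. lra. lra. }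
   assert (-1 <= -(g - ga) <= 1) by (split; lra).
   split; nra. Qed.

Theorem proposition3p12 (gamma : R) (g : nat -> R)
  (hgamma : 0 <= gamma <= 1)
  (hg : forall n, 0 <= g n <= 1)
  (hO : exists K : R, forall n : nat, (1 <= n)%nat -> Rabs (g n - gamma) <= K / INR n) :
  forall u : R, 0 < u < 1 ->
    is_lim_seq (fun n => phi n (g n) u)
      (1 / 2 * indic (fun x => x = gamma) u + indic (fun x => gamma < x <= 1) u)
    /\ (u <> gamma -> is_lim_seq (fun n => Derive (phi n (g n)) u) 0)
    /\ (u = gamma -> is_lim_seq (fun n => Derive (phi n (g n)) u) p_infty).
Proof.
 intros u Hu. destruct hO as [K HK].
 set (k := fun n => kk n (g n)).
 assert (Hk : forall n, (1 <= n)%nat -> (1 <= k n <= n)%nat /\ Rabs (INR (k n) - INR n * gamma) <= Rabs K + 1).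
 { intros n Hn. apply kk_props; auto. }
 assert (Hk2 : forall n, (1 <= n)%nat -> Rabs (INR (k n) - INR n * gamma) <= Rabs K + 1) by (intros; apply Hk; auto).
 assert (Ephi : forall n, phi n (g n) u = Tl n u (k n)) by (intros; apply phi_Tl; auto).
 assert (ED : forall n, Derive (phi n (g n)) u = / (u * (1 - u)) * G n (fun x => (INR x - INR n * u) * B n u x) (k n)).
 { intros n. rewrite (Derive_ext _ (fun t => Tl n t (k n))) by (intros; apply phi_Tl; auto).
   apply is_derive_unique. apply derive_Tl. auto. }
 split; [|split].
 - apply (is_lim_seq_ext (fun n => Tl n u (k n))). intros; rewrite Ephi; auto.
   unfold indic. destruct (excluded_middle_informative (u = gamma)) as [E|E].
   + destruct (excluded_middle_informative (gamma < u <= 1)). lra.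
     replace (1 / 2 * 1 + 0) with (1/2) by ring. subst u. apply (val_center gamma (Rabs K + 1)); auto.
   + assert (V := val_far u gamma (Rabs K + 1) k Hu E Hk2).
     destruct (Rlt_dec gamma u); destruct (excluded_middle_informative (gamma < u <= 1)).
     * replace (1 / 2 * 0 + 1) with 1 by ring. auto.
     * lra.
     * lra.
     * replace (1 / 2 * 0 + 0) with 0 by ring. auto.
 - intros Hne. apply (is_lim_seq_ext (fun n => / (u * (1 - u)) * G n (fun x => (INR x - INR n * u) * B n u x) (k n))).
   intros; rewrite ED; auto. apply (deriv_far u gamma (Rabs K + 1)); auto.
 - intros E. apply (is_lim_seq_ext (fun n => / (u * (1 - u)) * G n (fun x => (INR x - INR n * u) * B n u x) (k n))).
   intros; rewrite ED; auto. subst u. apply (deriv_center gamma (Rabs K + 1)); auto.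
Qed.
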